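(* For every $k\ge1$, as polynomials in $j$, \begin{align*} \sigma_k(j)&=\frac{1}{2^kk!}j^{2k}-\frac{2k+1}{3\cdot2^k(k-1)!}j^{2k-1}+O(j^{2k-2}),\\ Q_k(j)&=\frac{(-1)^k}{2^kk!}j^{2k}+\frac{(-1)^k(2k-5)}{3\cdot2^k(k-1)!}j^{2k-1}+O(j^{2k-2}), \end{align*} where $O(j^{2k-2})$ denotes a polynomial in $j$ of degree at most $2k-2$.
   Context: For positive integers $j$: $\sigma_0(j)=1$, $\sigma_i(j)=\sum_{1\le n_1<\cdots<n_i\le j-1}n_1\cdots n_i$ for $1\le i\le j-1$, $\sigma_i(j)=0$ for $i\ge j$; $Q_0(j)=1$ and $Q_k(j)=-\sum_{i=1}^k\sigma_i(j)Q_{k-i}(j)$ for $k\ge1$. For each fixed $k$, $\sigma_k(j)$ and $Q_k(j)$ agree on all positive integers $j$ with polynomials in $j$ with rational coefficients, and are identified with these polynomials. *)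

(* Defs.v *)
From mathcomp Require Import all_boot all_order all_algebra.
Set Implicit Arguments. Unset Strict Implicit. Unset Printing Implicit Defensive.
Import Order.TTheory GRing.Theory Num.Theory.
Local Open Scope ring_scope.

(* sigma i j = sum over i-element subsets {n_1 < ... < n_i} of {1,...,j-1}
   of n_1 * ... * n_i.  An element a : 'I_(j-1) encodes n = a+1.
   For i >= j the sum is empty, hence 0; sigma 0 j = 1. *)
Definition sigma (i j : nat) : rat :=
  \sum_(A : {set 'I_(j.-1)} | #|A| == i) \prod_(a in A) ((a : nat).+1)%:R.

Fixpoint Q_seq (j n : nat) : seq rat :=
  match n with
  | 0 => [:: 1]
  | n'.+1 =>
      let s := Q_seq j n' in
      rcons s (- \sum_(1 <= i < n'.+2) sigma i j * nth 0 s (n'.+1 - i))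
  end.

Definition Q (k j : nat) : rat := nth 0 (Q_seq j k) k.

(* Main.v *)
Require Import Defs.
From mathcomp Require Import all_boot all_order all_algebra.
From mathcomp Require Import ring lra zify.
Import Order.TTheory GRing.Theory Num.Theory.
Local Open Scope ring_scope.
Definition t1 (p : {poly rat}) (d : nat) : rat := if d is d'.+1 then p`_d' else 0.

Lemma sum1 n (G : nat -> rat) a : (a < n)%N ->
  (forall j, (j < n)%N -> j != a -> G j = 0) -> \sum_(j < n) G j = G a.
Proof.
move=> ha H; rewrite (bigD1 (Ordinal ha)) //= big1 ?addr0 //.
move=> j hj.
apply: H; first exact: ltn_ord.
by apply: contraNneq hj => e; apply/eqP/val_inj.
Qed.

Lemma sum2 n (G : nat -> rat) a b : (a < n)%N -> (b < n)%N -> a != b ->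
  (forall j, (j < n)%N -> j != a -> j != b -> G j = 0) ->
  \sum_(j < n) G j = G a + G b.
Proof.
move=> ha hb hab H.
transitivity (\sum_(j < n) ((if (j:nat) == b then 0 else G j) + (if (j:nat) == b then G b else 0))).
  by apply: eq_bigr => j _; case: eqP => [->|]; rewrite ?add0r ?addr0.
rewrite big_split /=.
rewrite (@sum1 _ (fun j => if j == b then 0 else G j) _ ha); last first.
  move=> j hj hja; case: eqP => // /eqP hjb; exact: H.
rewrite (negbTE hab) (@sum1 _ (fun j => if j == b then G b else 0) _ hb) ?eqxx //.
by move=> j _ /negbTE ->.
Qed.

Lemma coefM_top (p q : {poly rat}) dp dq : (size p <= dp.+1)%N -> (size q <= dq.+1)%N ->
  (p * q)`_(dp + dq) = p`_dp * q`_dq.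
Proof.
move=> hp hq; rewrite coefM (@sum1 _ (fun j => p`_j * q`_(dp + dq - j)) dp).
- by rewrite addKn.
- lia.
move=> j hj hjd; case: (ltnP j dp) => h.
  by rewrite (nth_default _ (_ : (size q <= _)%N)) ?mulr0 //; lia.
by rewrite (nth_default _ (_ : (size p <= _)%N)) ?mul0r //; lia.
Qed.

Lemma coefM_sec (p q : {poly rat}) dp dq : (0 < dp)%N -> (size p <= dp.+1)%N -> (size q <= dq.+1)%N ->
  t1 (p * q) (dp + dq) = p`_dp * t1 q dq + t1 p dp * q`_dq.
Proof.
case: dp => // dp _ hp hq; rewrite addSn /= coefM.
case: dq hq => [|dq] hq.
  rewrite mulr0 add0r addn0 (@sum1 _ (fun j => p`_j * q`_(dp - j)) dp) ?subnn //.
  move=> j hj hjd.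
  by rewrite (nth_default _ (_ : (size q <= _)%N)) ?mulr0 //; lia.
rewrite (@sum2 _ (fun j => p`_j * q`_(dp + dq.+1 - j)) dp.+1 dp) /=; try lia.
  congr (_ * _ + _ * _); congr (_`_ _); lia.
move=> j hj h1 h2; case: (ltnP j dp) => h.
  by rewrite (nth_default _ (_ : (size q <= _)%N)) ?mulr0 //; lia.
by rewrite (nth_default _ (_ : (size p <= _)%N)) ?mul0r //; lia.
Qed.
Lemma coefXD1 n i : (('X + 1 : {poly rat}) ^+ n)`_i = ('C(n, i))%:R.
Proof.
rewrite exprD1n coef_sum.
under eq_bigr => j _ do rewrite coefMn coefXn.
case: (leqP i n) => h.
  rewrite (@sum1 _ (fun j => (i == j)%:R *+ 'C(n, j)) i) ?eqxx ?mulr1n //.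
  by move=> j _ /negbTE; rewrite eq_sym => ->; rewrite mul0rn.
rewrite bin_small // big1 // => j _.
have /negbTE -> : i != j by apply/eqP => e; move: (ltn_ord j); rewrite -e; lia.
by rewrite mul0rn.
Qed.

Lemma binSS2 n : ('C(n.+2, n) * 2 = n.+2 * n.+1)%N.
Proof.
elim: n => [|n IH]; first by [].
rewrite binS binSn mulnDl IH; lia.
Qed.

Lemma antidiff d (q : {poly rat}) : (size q <= d.+1)%N ->
  {S : {poly rat} | (size S <= d.+2)%N /\
    (forall x, S.[x + 1] - S.[x] = q.[x]) /\
    S`_(d.+1) = q`_d / (d.+1)%:R /\
    S`_d * d%:R = t1 q d - q`_d * d%:R / 2}.
Proof.
elim: d q => [|d IH] q hq.
  exists (q`_0 *: 'X); split; [|split; [|split]].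
  - by rewrite (leq_trans (size_scale_leq _ _)) // size_polyX.
  - move=> x; rewrite !hornerZ !hornerX [in RHS](size1_polyC hq) hornerC; ring.
  - by rewrite coefZ coefX /= mulr1.
  - by rewrite /= !mulr0 mul0r subr0.
set a := q`_d.+1.
set D := (a / (d.+2)%:R) *: (('X + 1) ^+ d.+2 - 'X^(d.+2)).
have hD : forall j, D`_j = a / (d.+2)%:R * (('C(d.+2, j))%:R - (j == d.+2)%:R).
  by move=> j; rewrite coefZ coefB coefXD1 coefXn.
have hq' : (size (q - D)%R <= d.+1)%N.
  apply/leq_sizeP => j hj; rewrite coefB hD.
  case: (ltngtP j d.+1) => h; first lia.
  - have -> : q`_j = 0 by move/leq_sizeP: hq; apply.
    case: (ltngtP j d.+2) => h2; first lia.
    + by rewrite bin_small // subrr mulr0 subrr.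
    + by rewrite h2 binn subrr mulr0 subrr.
  - rewrite h binSn (_ : (d.+1 == d.+2) = false) ?subr0; last by apply/eqP; lia.
    rewrite /a mulfVK ?subrr //.
    by rewrite pnatr_eq0.
have [S' [hs [hd [h1 h2]]]] := IH _ hq'.
exists ((a / (d.+2)%:R) *: 'X^(d.+2) + S'); split; [|split; [|split]].
- apply/leq_sizeP => j hj; rewrite coefD coefZ coefXn.
  rewrite (_ : (j == d.+2) = false); last by apply/eqP; lia.
  by rewrite mulr0 add0r; move/leq_sizeP: hs; apply; lia.
- move=> x; rewrite !hornerD !hornerZ !hornerXn.
  have := hd x; rewrite hornerD hornerN /D hornerZ hornerD hornerN horner_exp hornerD hornerX hornerC hornerXn => e.
  have -> : S'.[x + 1] = S'.[x] + (q.[x] - a / (d.+2)%:R * ((x + 1) ^+ d.+2 - x ^+ d.+2)).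
    by rewrite -e; ring.
  ring.
- rewrite coefD coefZ coefXn eqxx mulr1.
  by move/leq_sizeP: hs => ->; rewrite ?addr0.
- rewrite coefD coefZ coefXn (_ : (d.+1 == d.+2) = false) ?mulr0 ?add0r; last by apply/eqP; lia.
  rewrite h1 coefB hD (_ : (d == d.+2) = false) ?subr0; last by apply/eqP; lia.
  have hb : ('C(d.+2, d))%:R = (d.+2)%:R * (d.+1)%:R / 2 :> rat.
    by rewrite -natrM -binSS2 natrM mulfK.
  rewrite hb /=.
  have h3 : (d.+1)%:R != 0 :> rat by rewrite pnatr_eq0.
  have h4 : (d.+2)%:R != 0 :> rat by rewrite pnatr_eq0.
  field; apply/andP; split; first by rewrite nat1r pnatr_eq0.
  rewrite (_ : 2 + d%:R = (2 + d)%:R :> rat) ?pnatr_eq0 //; by rewrite natrD.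
Qed.
Definition ps n : seq rat := mkseq (fun i => (i.+1)%:R) n.
Definition Fp n : {poly rat} := \prod_(p <- ps n) ('X - p%:P).

Lemma sigma_coef n k : (k <= n)%N -> sigma k n.+1 = (-1) ^+ k * (Fp n)`_(n - k).
Proof.
move=> hk.
have := @coef_prod_XsubC _ (ps n) (n - k).
rewrite /ps size_mkseq subKn // leq_subr => /(_ isT) ->.
rewrite mulrA -exprD -signr_odd oddD addbb expr0 mul1r.
rewrite /sigma; apply: eq_big => // A.
by move=> _; apply: eq_bigr => i _; rewrite nth_mkseq.
Qed.

Lemma sigma_big k n : (n < k)%N -> sigma k n.+1 = 0.
Proof.
move=> h; rewrite /sigma big1 // => A /eqP hA.
have := max_card A; rewrite card_ord hA; lia.
Qed.

Lemma sigma0 j : sigma 0 j = 1.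
Proof.
rewrite /sigma (eq_bigl (fun A => A == set0)); last by move=> A; rewrite cards_eq0.
by rewrite big_pred1_eq big_set0.
Qed.

Lemma size_Fp n : size (Fp n) = n.+1.
Proof. by rewrite /Fp size_prod_XsubC /ps size_mkseq. Qed.

Lemma sigma_rec k n : sigma k.+1 n.+2 = sigma k.+1 n.+1 + (n.+1)%:R * sigma k n.+1.
Proof.
case: (ltnP n k) => hkn.
  rewrite !sigma_big //; try lia; rewrite mulr0 addr0 //.
have hF : Fp n.+1 = Fp n * ('X - ((n.+1)%:R)%:P).
  by rewrite /Fp /ps mkseqS big_rcons.
rewrite sigma_coef // (@sigma_coef n k hkn) hF mulrBr coefB coefMX coefMC.
have -> : (n.+1 - k.+1 = n - k)%N by lia.
case: (ltngtP k n) => h.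
- rewrite (_ : (n - k == 0)%N = false); last by apply/eqP; lia.
  rewrite (@sigma_coef n k.+1 h) (_ : (n - k).-1 = n - k.+1)%N; last by lia.
  by rewrite exprS; ring.
- lia.
- subst k; rewrite subnn eqxx sigma_big // add0r exprS; ring.
Qed.

Definition A (k : nat) : rat := 1 / (2 ^+ k * (k`!)%:R).
Definition B (k : nat) : rat := - ((2 * k + 1)%:R * k%:R / (3 * 2 ^+ k * (k`!)%:R)).
Lemma fact_neq0 k : (k`!)%:R != 0 :> rat.
Proof. by rewrite pnatr_eq0 -lt0n fact_gt0. Qed.
Lemma pow2_neq0 k : 2 ^+ k != 0 :> rat.
Proof. by rewrite expf_eq0 pnatr_eq0 andbF. Qed.
Lemma K_ge0 k : 0 <= k%:R :> rat.
Proof. exact: ler0n. Qed.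

Lemma A_step k : A k / ((2*k).+2)%:R = A k.+1.
Proof.
rewrite /A factS exprS natrM.
have c2 : ((2*k).+2)%:R = 2 * (k.+1)%:R :> rat by rewrite -natrM mulnS.
rewrite c2. have := fact_neq0 k; have := pow2_neq0 k. have : (k.+1)%:R != 0 :> rat by rewrite pnatr_eq0.
move=> h1 h2 h3. have h4 : 1 + k%:R != 0 :> rat by rewrite nat1r.
by field; rewrite h2 h3 h4.
Qed.

Lemma B_step k : (B k - A k * ((2*k).+1)%:R / 2) / ((2*k).+1)%:R = B k.+1.
Proof.
rewrite /A /B factS exprS natrM.
have c1 : ((2*k).+1)%:R = 2 * k%:R + 1 :> rat by rewrite -natr1 natrM.
have c3 : (k.+1)%:R = k%:R + 1 :> rat by rewrite natr1.
have c4 : (2 * k.+1 + 1)%:R = 2 * k%:R + 3 :> rat by rewrite natrD natrM c3; ring.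
have c5 : (2 * k + 1)%:R = 2 * k%:R + 1 :> rat by rewrite addn1.
rewrite c1 c3 c4 c5.
have := fact_neq0 k; have := pow2_neq0 k; have := K_ge0 k.
move=> h1 h2 h3.
have h4 : k%:R + 1 != 0 :> rat by apply: lt0r_neq0; lra.
have h5 : 2 * k%:R + 1 != 0 :> rat by apply: lt0r_neq0; lra.
by field; rewrite h2 h3 h4 h5.
Qed.

Lemma t1E (p : {poly rat}) d : (if (d == 0)%N then 0 else p`_d.-1) = t1 p d.
Proof. by case: d. Qed.
Definition SigSpec k (P : {poly rat}) :=
  (forall n, P.[(n.+1)%:R] = sigma k n.+1) /\ (size P <= (2 * k).+1)%N /\
  P`_(2 * k) = A k /\ t1 P (2 * k) = B k.

Lemma sig_ex k : {P | SigSpec k P}.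
Proof.
elim: k => [|k [P [hv [hs [ha hb]]]]].
  exists 1; split; [|split; [|split]].
  - by move=> n; rewrite hornerC sigma0.
  - by rewrite size_poly1.
  - by rewrite coefC /A /= expr0 mul1r divr1.
  - by rewrite /= /B mulr0 mul0r oppr0.
set q := 'X * P.
have hq : (size q <= (2 * k).+2)%N.
  apply/leq_sizeP => j hj; rewrite coefXM; case: eqP => // _.
  by move/leq_sizeP: hs; apply; lia.
have [S [hS [hd [h1 h2]]]] := @antidiff _ _ hq.
exists (S - (S.[1])%:P).
have e : (2 * k.+1 = (2 * k).+2)%N by lia.
rewrite /SigSpec e; split; [|split; [|split]].
- elim=> [|n IH].
    by rewrite hornerD hornerN hornerC subrr sigma_big.
  rewrite sigma_rec -IH -natr1 !hornerD !hornerN !hornerC.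
  have := hd (n.+1)%:R; rewrite /q hornerM hornerX hv => h; rewrite -h; ring.
- apply/leq_sizeP => j hj; rewrite coefB coefC.
  rewrite (_ : (j == 0)%N = false); last by apply/eqP; lia.
  by rewrite subr0; move/leq_sizeP: hS; apply.
- by rewrite coefB coefC /= subr0 h1 /q coefXM /= ha A_step.
- rewrite /= coefB coefC /= subr0.
  move: h2; rewrite /q /= !coefXM /= t1E hb ha => h2.
  by rewrite -B_step -h2 mulfK // pnatr_eq0.
Qed.
Definition QA (k : nat) : rat := (-1) ^+ k * A k.
Definition QB (k : nat) : rat := (-1) ^+ k * ((2 * k)%:R - 5) * k%:R / (3 * 2 ^+ k * (k`!)%:R).

Lemma alt0 m : (0 < m)%N -> \sum_(i < m.+1) (-1) ^+ (m - i) * ('C(m, i))%:R = 0 :> rat.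
Proof.
move=> hm; have := exprDn (-1 : rat) 1 m.
rewrite addNr expr0n (_ : (m == 0%N) = false); last by apply/eqP; lia.
move=> H; transitivity (false%:R : rat) => //; rewrite H.
by apply: eq_bigr => i _; rewrite expr1n mulr1 mulr_natr.
Qed.

Lemma alt1 m : (1 < m)%N -> \sum_(i < m.+1) (-1) ^+ (m - i) * ((i * 'C(m, i))%N)%:R = 0 :> rat.
Proof.
case: m => // m hm; rewrite big_ord_recl /= mul0n mulr0 add0r.
transitivity (m.+1%:R * \sum_(i < m.+1) (-1) ^+ (m - i) * ('C(m, i))%:R : rat); last first.
  by rewrite alt0 ?mulr0 //; lia.
rewrite mulr_sumr; apply: eq_bigr => i _.
rewrite /bump /= add1n subSS -mul_bin_diag /= natrM; ring.
Qed.

Lemma binfact_rat m i : (i <= m)%N ->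
  (m`!)%:R = ('C(m, i))%:R * (i`!)%:R * ((m - i)`!)%:R :> rat.
Proof. by move=> h; rewrite -!natrM -mulnA bin_fact. Qed.

Lemma pow2_split m i : (i <= m)%N -> 2 ^+ m = 2 ^+ i * 2 ^+ (m - i) :> rat.
Proof. by move=> h; rewrite -exprD subnKC. Qed.

Lemma bin_neq0 m i : (i <= m)%N -> ('C(m, i))%:R != 0 :> rat.
Proof. by move=> h; rewrite pnatr_eq0 -lt0n bin_gt0. Qed.

Lemma term1 m i : (i <= m)%N ->
  A i * QA (m - i) = (-1) ^+ (m - i) * ('C(m, i))%:R / (2 ^+ m * (m`!)%:R).
Proof.
move=> h; rewrite /QA /A (@binfact_rat m i h) (@pow2_split m i h).
have := @bin_neq0 m i h; have := fact_neq0 i; have := fact_neq0 (m - i).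
have := pow2_neq0 i; have := pow2_neq0 (m - i).
move=> h1 h2 h3 h4 h5; field.
by rewrite h1 h2 h3 h4 h5.
Qed.

Lemma term2 m i : (i <= m)%N ->
  A i * QB (m - i) + B i * QA (m - i) =
  (-1) ^+ (m - i) * ('C(m, i))%:R *
    (2 * m%:R ^+ 2 - 5 * m%:R + (4 - 4 * m%:R) * i%:R) / (3 * 2 ^+ m * (m`!)%:R).
Proof.
move=> h; rewrite /QA /QB /A /B (@binfact_rat m i h) (@pow2_split m i h).
have := @bin_neq0 m i h; have := fact_neq0 i; have := fact_neq0 (m - i).
have := pow2_neq0 i; have := pow2_neq0 (m - i).
rewrite !natrM natrD (natrB _ h) => h1 h2 h3 h4 h5; field.
by rewrite h1 h2 h3 h4 h5.
Qed.

Lemma I1 m : (0 < m)%N -> \sum_(i < m.+1) A i * QA (m - i) = 0.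
Proof.
move=> hm; rewrite (eq_bigr (fun i : 'I_m.+1 => (-1) ^+ (m - i) * ('C(m, i))%:R / (2 ^+ m * (m`!)%:R))).
  by rewrite -mulr_suml alt0 ?mul0r.
by move=> i _; rewrite term1 // -ltnS.
Qed.

Lemma I2 m : (0 < m)%N -> \sum_(i < m.+1) (A i * QB (m - i) + B i * QA (m - i)) = 0.
Proof.
move=> hm.
set al := 2 * m%:R ^+ 2 - 5 * m%:R : rat.
set be := 4 - 4 * m%:R : rat.
set D := 3 * 2 ^+ m * (m`!)%:R : rat.
rewrite (eq_bigr (fun i : 'I_m.+1 => (al * ((-1) ^+ (m - i) * ('C(m, i))%:R) +
    be * ((-1) ^+ (m - i) * ((i * 'C(m, i))%N)%:R)) / D)); last first.
  move=> i _; rewrite term2; last by rewrite -ltnS.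
  rewrite natrM /al /be /D.
  move: ((-1) ^+ (m - i)) ('C(m, i)%:R) (i%:R) (m%:R) (3 * 2 ^+ m * m`!%:R) => s c x y d; ring.
rewrite -mulr_suml big_split /= -!mulr_sumr alt0 // mulr0 add0r.
case: (ltngtP m 1) => h; first lia.
  by rewrite alt1 // !mulr0 mul0r.
have -> : be = 0 by rewrite /be h mulr1n mulr1 subrr.
by rewrite !mul0r.
Qed.
Definition Psig k : {poly rat} := sval (sig_ex k).
Lemma PsigP k : SigSpec k (Psig k).
Proof. exact: (svalP (sig_ex k)). Qed.

Fixpoint RQ_seq (n : nat) : seq {poly rat} :=
  match n with
  | 0 => [:: 1]
  | n'.+1 =>
      let s := RQ_seq n' in
      rcons s (- \sum_(1 <= i < n'.+2) Psig i * nth 0 s (n'.+1 - i))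
  end.
Definition RQ k := nth 0 (RQ_seq k) k.

Lemma size_RQ_seq n : size (RQ_seq n) = n.+1.
Proof. by elim: n => //= n IH; rewrite size_rcons IH. Qed.

Lemma RQ_seq_nth n m : (m <= n)%N -> nth 0 (RQ_seq n) m = RQ m.
Proof.
elim: n m => [|n IH] m hm; first by move: hm; rewrite leqn0 => /eqP ->.
rewrite /= nth_rcons size_RQ_seq.
case: (ltnP m n.+1) => h; first by rewrite IH.
have -> : m = n.+1 by lia.
by rewrite eqxx /RQ /= nth_rcons size_RQ_seq ltnn eqxx.
Qed.

Lemma RQ_rec k : RQ k.+1 = - \sum_(1 <= i < k.+2) Psig i * RQ (k.+1 - i).
Proof.
rewrite {1}/RQ /= nth_rcons size_RQ_seq ltnn eqxx; congr (- _).
by apply: eq_big_nat => i hi; rewrite RQ_seq_nth //; lia.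
Qed.

Lemma RQ_eval n k : map (fun p => p.[(n.+1)%:R]) (RQ_seq k) = Q_seq n.+1 k.
Proof.
elim: k => [|k IH] /=; first by rewrite hornerC.
rewrite map_rcons IH; congr rcons.
rewrite hornerN horner_sum; congr (- _).
apply: eq_big_nat => i hi; rewrite hornerM.
have [hv _] := PsigP i; rewrite hv -IH (nth_map 0) // size_RQ_seq; lia.
Qed.

Lemma Q_eval k n : Q k n.+1 = (RQ k).[(n.+1)%:R].
Proof. by rewrite /Q -RQ_eval (nth_map 0) ?size_RQ_seq. Qed.

Lemma size_mul_bound (p q : {poly rat}) dp dq : (size p <= dp.+1)%N -> (size q <= dq.+1)%N ->
  (size (p * q)%R <= (dp + dq).+1)%N.
Proof.
move=> hp hq; apply: leq_trans (size_mul_leq _ _) _.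
have := leq_add hp hq; lia.
Qed.

Lemma t1N p d : t1 (- p) d = - t1 p d.
Proof. by case: d => [|d] /=; rewrite ?oppr0 ?coefN. Qed.

Lemma t1_sum (r : seq nat) (P : pred nat) (F : nat -> {poly rat}) d :
  t1 (\sum_(i <- r | P i) F i) d = \sum_(i <- r | P i) t1 (F i) d.
Proof. case: d => [|d] /=; [by rewrite big1 | by rewrite coef_sum]. Qed.

Definition QSpec k (R : {poly rat}) :=
  (size R <= (2 * k).+1)%N /\ R`_(2 * k) = QA k /\ t1 R (2 * k) = QB k.

Lemma RQ_spec k : QSpec k (RQ k).
Proof.
elim: k {-2}k (leqnn k) => [|k IH] m hm.
  move: hm; rewrite leqn0 => /eqP ->.
  rewrite /QSpec /RQ /= size_poly1 coefC /= /QA /QB /A.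
  by rewrite expr0 !mul1r divr1 mulr0 mul0r.
case: (ltnP m k.+1) => h; first by apply: IH; lia.
have -> : m = k.+1 by lia.
have IH' : forall i, (1 <= i < k.+2)%N -> QSpec (k.+1 - i) (RQ (k.+1 - i)).
  by move=> i hi; apply: IH; lia.
have e : forall i, (1 <= i < k.+2)%N -> (2 * k.+1 = 2 * i + 2 * (k.+1 - i))%N.
  by move=> i hi; lia.
rewrite /QSpec RQ_rec; split; [|split].
- apply/leq_sizeP => j hj; rewrite coefN coef_sum big_nat big1 ?oppr0 // => i hi.
  have [_ [hs _]] := PsigP i; have [hs' _] := IH' i hi.
  by move/leq_sizeP: (size_mul_bound _ _ _ _ hs hs'); apply; rewrite -(e i hi).
- rewrite coefN coef_sum.
  have -> : \sum_(1 <= i < k.+2) (Psig i * RQ (k.+1 - i))`_(2 * k.+1) = \sum_(1 <= i < k.+2) A i * QA (k.+1 - i).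
    apply: eq_big_nat => i hi; have [_ [hs [ha _]]] := PsigP i; have [hs' [ha' _]] := IH' i hi.
    by rewrite (e i hi) (coefM_top _ _ _ _ hs hs') ha ha'.
  have := @I1 k.+1 isT; rewrite big_ord_recl /= subn0.
  rewrite big_add1 /= big_mkord.
  rewrite /A /= expr0 mul1r divr1 mul1r => H.
  by move/eqP: H; rewrite addr_eq0 => /eqP ->.
- rewrite t1N t1_sum.
  have -> : \sum_(1 <= i < k.+2) t1 (Psig i * RQ (k.+1 - i)) (2 * k.+1) = \sum_(1 <= i < k.+2) (A i * QB (k.+1 - i) + B i * QA (k.+1 - i)).
    apply: eq_big_nat => i hi; have [_ [hs [ha hb]]] := PsigP i; have [hs' [ha' hb']] := IH' i hi.
    by rewrite (e i hi) (coefM_sec _ _ _ _ _ hs hs') ?ha ?hb ?ha' ?hb' //; lia.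
  have := @I2 k.+1 isT; rewrite big_ord_recl /= subn0.
  rewrite big_add1 /= big_mkord.
  rewrite /A /B /= expr0 mul1r divr1 mul1r !mulr0 mul0r oppr0 mul0r addr0 => H.
  by move/eqP: H; rewrite addr_eq0 => /eqP ->.
Qed.
Theorem lemma2p7 (k : nat) (hk : (1 <= k)%N) :
  (exists P : {poly rat},
     (forall j : nat, (0 < j)%N -> sigma k j = P.[j%:R]) /\
     (size P <= (2 * k).+1)%N /\
     P`_(2 * k) = 1 / (2 ^+ k * (k`!)%:R) /\
     P`_((2 * k).-1) = - ((2 * k + 1)%:R / (3 * 2 ^+ k * ((k.-1)`!)%:R))) /\
  (exists P : {poly rat},
     (forall j : nat, (0 < j)%N -> Q k j = P.[j%:R]) /\
     (size P <= (2 * k).+1)%N /\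
     P`_(2 * k) = (-1) ^+ k / (2 ^+ k * (k`!)%:R) /\
     P`_((2 * k).-1) =
       (-1) ^+ k * ((2 * k)%:R - 5) / (3 * 2 ^+ k * ((k.-1)`!)%:R)).
Proof.
case: k hk => // k _.
have e : (2 * k.+1).-1 = (2 * k).+1 by rewrite mulnS.
have t1e : forall p : {poly rat}, p`_((2 * k.+1).-1) = t1 p (2 * k.+1) by move=> p; rewrite mulnS.
have h1 := fact_neq0 k; have h2 := pow2_neq0 k.
have h3' : 1 + k%:R != 0 :> rat by rewrite nat1r pnatr_eq0.
have h4 := pow2_neq0 k.+1.
split.
- have [hv [hs [ha hb]]] := PsigP k.+1.
  exists (Psig k.+1); split; [|split; [|split]] => //.
  + by case=> // n _; rewrite hv.
  + rewrite t1e hb /B factS natrM exprS /=.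
    by field; rewrite ?h1 ?h2 ?h3' ?h4.
- have [hs [ha hb]] := RQ_spec k.+1.
  exists (RQ k.+1); split; [|split; [|split]] => //.
  + by case=> // n _; rewrite Q_eval.
  + by rewrite ha /QA /A mul1r.
  + rewrite t1e hb /QB factS natrM exprS /=.
    by field; rewrite ?h1 ?h2 ?h3' ?h4.
Qed.
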